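(* For $i=1,2$ let $\mathcal{G}_i$ be an $r_i$-regular graph with $n_i$ vertices, and let $\nu_{11},\ldots,\nu_{1n_1}$ be the signless Laplacian eigenvalues of $\mathcal{G}_1$. Then $\mathcal{G}_1\circledast\mathcal{G}_2$ is signless Laplacian integral if and only if $\mathcal{G}_2$ is signless Laplacian integral and, for each $i=1,2,\ldots,n_1$, the roots of $x-n_2-n_2\nu_{1i}-n_2\chi_{Q_{\mathcal{G}_2}}(x-n_2)$ are integers.
   Context: All graphs are simple, finite and undirected. $Q_{\mathcal{G}}=D_{\mathcal{G}}+A_{\mathcal{G}}$ is the signless Laplacian matrix (degree matrix plus adjacency matrix). A graph is signless Laplacian integral if all eigenvalues of its signless Laplacian matrix are integers. The signless Laplacian coronal of a graph $\mathcal{G}$ on $n$ vertices is the rational function $\chi_{Q_{\mathcal{G}}}(x)=\mathbf{1}_n^T(xI_n-Q_{\mathcal{G}})^{-1}\mathbf{1}_n$, $\mathbf{1}_n$ the all-ones vector; ''roots'' of the expression in the claim are the values of $x$ at which this rational function vanishes. The graph product $\mathcal{G}_1\circledast\mathcal{G}_2$ of $\mathcal{G}_1$ (vertices $u_1,\ldots,u_{n_1}$) and $\mathcal{G}_2$ (vertices $v_1,\ldots,v_{n_2}$) has vertex set $\{a_{ik},b_{ik}:1\le i\le n_1,1\le k\le n_2\}$ and edges: $a_{ik}a_{jl}$ for all $k,l$ whenever $u_iu_j\in E(\mathcal{G}_1)$; $b_{ri}b_{rj}$ for all $r$ whenever $v_iv_j\in E(\mathcal{G}_2)$; $a_{ip}b_{iq}$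 for all $i,p,q$. *)

(* Defs.v *)
From HB Require Import structures.
From mathcomp Require Import all_boot all_order all_algebra algC.
Set Implicit Arguments. Unset Strict Implicit. Unset Printing Implicit Defensive.
Import Order.TTheory GRing.Theory Num.Theory.
Local Open Scope ring_scope.

Definition simple_graph (V : finType) (e : rel V) : Prop :=
  irreflexive e /\ symmetric e.

Definition gdeg (V : finType) (e : rel V) (v : V) : nat := #|[set w | e v w]|.

Definition regular (V : finType) (e : rel V) (r : nat) : Prop :=
  forall v : V, gdeg e v = r.

(* Signless Laplacian Q = D + A, over the algebraic complex numbers, with
   rows/columns indexed by the enumeration of V. *)
Definition slap (V : finType) (e : rel V) : 'M[algC]_#|V| :=
  \matrix_(i, j) ((i == j)%:R * (gdeg e (enum_val i))%:R
                  + (e (enum_val i) (enum_val j))%:R).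

Definition SL_integral (V : finType) (e : rel V) : Prop :=
  forall mu : algC, eigenvalue (slap e) mu -> mu \in Num.int.

(* The signless Laplacian coronal chi_Q(x) = 1^T (xI - Q)^{-1} 1, meaningful
   when xI - Q is invertible. *)
Definition coronal_defined (n : nat) (Q : 'M[algC]_n) (x : algC) : bool :=
  (x%:M - Q) \in unitmx.

Definition coronal (n : nat) (Q : 'M[algC]_n) (x : algC) : algC :=
  \sum_(i < n) \sum_(j < n) (invmx (x%:M - Q)) i j.

(* The product G1 circledast G2: vertices a_{ik} = inl (i,k), b_{ik} = inr (i,k). *)
Definition gprod_rel (V1 V2 : finType) (e1 : rel V1) (e2 : rel V2)
  : rel ((V1 * V2) + (V1 * V2))%type :=
  fun x y =>
    match x, y with
    | inl (i, _), inl (j, _) => e1 i j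
    | inr (r, i), inr (s, j) => (r == s) && e2 i j
    | inl (i, _), inr (j, _) => i == j
    | inr (j, _), inl (i, _) => i == j
    end.

(* Main.v *)
Require Import Defs.
From HB Require Import structures.
From mathcomp Require Import all_boot all_order all_algebra algC ring.
Import Order.TTheory GRing.Theory Num.Theory.
Set Implicit Arguments. Unset Strict Implicit. Unset Printing Implicit Defensive.
Local Open Scope ring_scope.

Lemma sum_enum (V : finType) (F : V -> algC) :
  \sum_(i < #|V|) F (enum_val i) = \sum_x F x.
Proof.
by rewrite (reindex enum_rank) //=; [apply: eq_bigr => x _; rewrite enum_rankK | exact: onW_bij (enum_rank_bij V)].
Qed.

Definition eqn (V : finType) (e : rel V) (f : V -> algC) (y : V) : algC :=
  (gdeg e y)%:R * f y + \sum_x (e x y)%:R * f x.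

Lemma slap_mul (V : finType) (e : rel V) (v : 'rV[algC]_#|V|) j :
  (v *m slap e) 0 j = eqn e (fun x => v 0 (enum_rank x)) (enum_val j).
Proof.
rewrite !mxE /eqn -[in RHS]sum_enum.
have E : forall i, slap e i j = (i == j)%:R * (gdeg e (enum_val i))%:R + (e (enum_val i) (enum_val j))%:R by move=> i; rewrite /slap mxE.
rewrite (eq_bigr (fun i => v 0 i * ((i == j)%:R * (gdeg e (enum_val i))%:R) + v 0 i * (e (enum_val i) (enum_val j))%:R)); last by move=> i _; rewrite E mulrDr.
rewrite big_split.
rewrite enum_valK.
congr (_ + _).
  rewrite (bigD1 j) //= eqxx mul1r big1 /= ?addr0; first by rewrite mulrC.
  by move=> i /negbTE ->; rewrite mul0r mulr0.
by apply: eq_bigr => i _; rewrite enum_valK mulrC.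
Qed.

Lemma eq_eqn (V : finType) (e : rel V) f g y :
  (forall x, f x = g x) -> eqn e f y = eqn e g y.
Proof. by move=> H; rewrite /eqn H; congr (_ + _); apply: eq_bigr => x _; rewrite H. Qed.

Lemma eigP (V : finType) (e : rel V) a :
  eigenvalue (slap e) a <->
  exists f : V -> algC, (exists x, f x != 0) /\ forall y, eqn e f y = a * f y.
Proof.
split.
  move/eigenvalueP => [v Hv vn0].
  exists (fun x => v 0 (enum_rank x)); split.
    have [i Hi] : exists i, v 0 i != 0.
      apply/existsP; apply: contraR vn0 => /existsPn H.
      by apply/eqP/rowP => i; rewrite mxE; apply/eqP; move: (H i); rewrite negbK.
    by exists (enum_val i); rewrite enum_valK.
  move=> y; rewrite -(enum_rankK y) -slap_mul Hv mxE enum_rankK //.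
move=> [f [[x fx] Hf]].
apply/eigenvalueP; exists (\row_i f (enum_val i)).
  apply/rowP => j; rewrite slap_mul !mxE.
  rewrite (@eq_eqn _ _ _ f) ?Hf //.
  by move=> z; rewrite mxE enum_rankK.
apply: contra fx => /eqP/rowP/(_ (enum_rank x)); rewrite !mxE enum_rankK => ->.
by [].
Qed.

Lemma deg_sum (V : finType) (e : rel V) v :
  (gdeg e v)%:R = \sum_w (e v w)%:R :> algC.
Proof.
rewrite /gdeg -sum1_card natr_sum big_mkcond /=.
by apply: eq_bigr => w _; rewrite inE; case: (e v w).
Qed.

Lemma reg_col (V : finType) (e : rel V) r :
  simple_graph e -> regular e r -> forall y, \sum_x (e x y)%:R = r%:R :> algC.
Proof.
move=> [_ sy] rg y; rewrite -(rg y) deg_sum.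
by apply: eq_bigr => x _; rewrite sy.
Qed.

Lemma sum_const (T : finType) (c : algC) : \sum_(i : T) c = #|T|%:R * c.
Proof. by rewrite sumr_const mulr_natl. Qed.

Lemma sum_delta (T : finType) (j : T) (F : T -> algC) :
  \sum_i (j == i)%:R * F i = F j.
Proof.
rewrite (bigD1 j) //= eqxx mul1r big1 ?addr0 // => i.
by rewrite eq_sym => /negbTE ->; rewrite mul0r.
Qed.

Lemma sum_delta' (T : finType) (j : T) (F : T -> algC) :
  \sum_i (i == j)%:R * F i = F j.
Proof. by rewrite -(sum_delta j); apply: eq_bigr => i _; rewrite eq_sym. Qed.

Lemma nonunit_eig n (Q : 'M[algC]_n) t :
  ~~ ((t%:M - Q) \in unitmx) -> eigenvalue Q t.
Proof.
rewrite unitmxE unitfE negbK => /det0P [v vn0 Hv]; apply/eigenvalueP; exists v => //.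
by move: Hv; rewrite mulmxBr mul_mx_scalar => /eqP; rewrite subr_eq0 => /eqP <-.
Qed.

Lemma coronal_reg (V : finType) (e : rel V) r t :
  simple_graph e -> regular e r -> (0 < #|V|)%N -> coronal_defined (slap e) t ->
  t - (2 * r)%:R != 0 /\ coronal (slap e) t = #|V|%:R / (t - (2 * r)%:R).
Proof.
move=> sg rg V0 cd.
set c := t - (2 * r)%:R.
set one : 'rV[algC]_#|V| := const_mx 1.
have one0 : one != 0.
  apply/eqP => /rowP /(_ (Ordinal V0)); rewrite !mxE => /eqP; by rewrite oner_eq0.
have H1 : one *m (t%:M - slap e) = c *: one.
  apply/rowP => j; rewrite mulmxBr mul_mx_scalar. rewrite mxE [X in _ + X]mxE slap_mul /eqn.
  rewrite rg !mxE mulr1.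
  under eq_bigr do rewrite mxE mulr1.
  by rewrite (reg_col sg rg) /c !mulr1 natrM mulr_natl mulr2n.
have cn0 : c != 0.
  apply: contra one0 => /eqP c0.
  by rewrite -(mulmxK cd one) H1 c0 scale0r mul0mx.
split => //.
have H2 : one *m invmx (t%:M - slap e) = c^-1 *: one.
  apply: (scalerI cn0).
  by rewrite scalerA mulfV // scale1r scalemxAl -H1 mulmxK.
rewrite /coronal exchange_big /=.
transitivity (\sum_(j < #|V|) c^-1).
  apply: eq_bigr => j _.
  have := congr1 (fun M : 'rV_#|V| => M 0 j) H2; rewrite /= !mxE mulr1 => <-.
  by apply: eq_bigr => i _; rewrite mxE mul1r.
by rewrite sum_const card_ord.
Qed.

Lemma sum_pair (A B : finType) (F : A * B -> algC) :
  \sum_p F p = \sum_i \sum_k F (i, k).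
Proof. by rewrite pair_bigA; apply: eq_bigr => -[i k]. Qed.

Lemma sum_sum (A : finType) (F : A + A -> algC) :
  \sum_x F x = \sum_p F (inl p) + \sum_p F (inr p).
Proof. by rewrite big_sumType. Qed.

Lemma natr_andb (a b : bool) : (a && b)%:R = a%:R * b%:R :> algC.
Proof. by case: a; case: b; rewrite ?mul1r ?mul0r. Qed.

Definition Uf (V1 V2 : finType) (f : (V1 * V2) + (V1 * V2) -> algC) i :=
  \sum_(k : V2) f (inl (i, k)).
Definition Wf (V1 V2 : finType) (f : (V1 * V2) + (V1 * V2) -> algC) i :=
  \sum_(k : V2) f (inr (i, k)).

Section Prod.
Variables (V1 V2 : finType) (e1 : rel V1) (e2 : rel V2) (r1 r2 : nat).
Hypotheses (sg1 : simple_graph e1) (sg2 : simple_graph e2)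
  (rg1 : regular e1 r1) (rg2 : regular e2 r2).
Let n2 : algC := #|V2|%:R.

Lemma deg_l j l :
  (gdeg (gprod_rel e1 e2) (inl (j, l)))%:R = n2 * r1%:R + n2.
Proof.
rewrite deg_sum sum_sum !sum_pair /=.
under eq_bigr do rewrite sum_const.
under [X in _ + X]eq_bigr do rewrite sum_const.
rewrite -!mulr_sumr -[X in _ = _ + X]mulr1; congr (_ * _ + _ * _).
  by rewrite -(rg1 j) deg_sum.
transitivity (\sum_i (j == i)%:R * (1 : algC)); first by apply: eq_bigr => i _; rewrite mulr1.
exact: (sum_delta j (fun _ => 1)).
Qed.

Lemma deg_r s l :
  (gdeg (gprod_rel e1 e2) (inr (s, l)))%:R = n2 + r2%:R.
Proof.
rewrite deg_sum sum_sum !sum_pair /=.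
under eq_bigr do rewrite sum_const.
rewrite -mulr_sumr.
under [X in _ + X]eq_bigr do (under eq_bigr do rewrite natr_andb; rewrite -mulr_sumr).
rewrite sum_delta -(rg2 l) deg_sum.
congr (_ + _).
rewrite -[RHS]mulr1; congr (_ * _).
transitivity (\sum_i (i == s)%:R * (1 : algC)); first by apply: eq_bigr => i _; rewrite mulr1.
exact: (sum_delta' s (fun _ => 1)).
Qed.
Lemma eqn_l f j l : eqn (gprod_rel e1 e2) f (inl (j, l)) =
  (n2 * r1%:R + n2) * f (inl (j, l)) + \sum_i (e1 i j)%:R * Uf f i + Wf f j.
Proof.
rewrite /eqn deg_l sum_sum !sum_pair /= -addrA; congr (_ + (_ + _)).
  by apply: eq_bigr => i _; rewrite /Uf mulr_sumr.
rewrite /Wf -(sum_delta j (fun i => \sum_k f (inr (i, k)))).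
by apply: eq_bigr => i _; rewrite mulr_sumr.
Qed.

Lemma eqn_r f s l : eqn (gprod_rel e1 e2) f (inr (s, l)) =
  (n2 + r2%:R) * f (inr (s, l)) + Uf f s + \sum_k (e2 k l)%:R * f (inr (s, k)).
Proof.
rewrite /eqn deg_r sum_sum !sum_pair /= -addrA; congr (_ + (_ + _)).
  rewrite /Uf -(sum_delta' s (fun i => \sum_k f (inl (i, k)))).
  by apply: eq_bigr => i _; rewrite mulr_sumr.
rewrite -(sum_delta' s (fun i => \sum_k (e2 k l)%:R * f (inr (i, k)))).
apply: eq_bigr => i _; rewrite mulr_sumr; apply: eq_bigr => k _.
by rewrite natr_andb mulrA.
Qed.
End Prod.

Lemma sum_eqn (V : finType) (e : rel V) r f :
  simple_graph e -> regular e r ->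
  \sum_y eqn e f y = (2 * r)%:R * \sum_x f x.
Proof.
move=> sg rg; rewrite /eqn big_split /= [X in _ + X]exchange_big /=.
under eq_bigr do rewrite rg.
under [X in _ + X]eq_bigr do rewrite -mulr_suml.
rewrite -mulr_sumr.
have E : forall x, \sum_y (e x y)%:R = r%:R :> algC.
  by move=> x; rewrite -deg_sum rg.
under [X in _ + X]eq_bigr do rewrite E.
by rewrite -mulr_sumr natrM mulr2n; ring.
Qed.

Unset Implicit Arguments.

Theorem theorem7 (V1 V2 : finType) (e1 : rel V1) (e2 : rel V2) (r1 r2 : nat) :
  simple_graph e1 -> simple_graph e2 ->
  regular e1 r1 -> regular e2 r2 ->
  (0 < #|V1|)%N -> (0 < #|V2|)%N ->
  SL_integral (gprod_rel e1 e2) <->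
  (SL_integral e2 /\
   forall nu1 : algC, eigenvalue (slap e1) nu1 ->
   forall x : algC,
     coronal_defined (slap e2) (x - #|V2|%:R) ->
     x - #|V2|%:R - #|V2|%:R * nu1
       - #|V2|%:R * coronal (slap e2) (x - #|V2|%:R) = 0 ->
     x \in Num.int).
Proof.
move=> sg1 sg2 rg1 rg2 V10 V20.
have n20 : (#|V2|%:R : algC) != 0 by rewrite pnatr_eq0 -lt0n.
have [i0 _] := card_gt0P V10.
have [k0 _] := card_gt0P V20.
split.
  move=> HP; split.
    move=> mu /eigP [f2 [[x0 fx0] Hf2]].
    case: (mu =P (2 * r2)%:R) => [-> | mu2]; first exact: natr_int.
    have S0 : \sum_x f2 x = 0.
      have := sum_eqn f2 sg2 rg2.
      under eq_bigr do rewrite Hf2.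
      rewrite -mulr_sumr => /eqP; rewrite -subr_eq0 -mulrBl mulf_eq0 subr_eq0.
      by case/orP => [/eqP // | /eqP].
    pose F (z : (V1 * V2) + (V1 * V2)) :=
      match z with inl _ => 0 | inr (i, k) => (i == i0)%:R * f2 k end.
    have : eigenvalue (slap (gprod_rel e1 e2)) (mu + #|V2|%:R).
      apply/eigP; exists F; split.
        by exists (inr (i0, x0)); rewrite /F eqxx mul1r.
      case => [[j l]|[s l]].
        rewrite (@eqn_l _ _ e1 e2 r1 rg1) /Uf /Wf /F /=.
        under eq_bigr do rewrite big1_eq mulr0.
        by rewrite big1_eq -mulr_sumr S0 !mulr0 !addr0.
      rewrite (@eqn_r _ _ e1 e2 r2 rg2) /Uf /F /= big1_eq addr0.
      move: (Hf2 l); rewrite /eqn rg2 => H.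
      case: (s == i0); last first.
        under eq_bigr do rewrite mul0r mulr0. by rewrite big1_eq !mul0r !mulr0 addr0.
      under eq_bigr do rewrite mul1r.
      rewrite !mul1r.
      have -> : \sum_k (e2 k l)%:R * f2 k = mu * f2 l - r2%:R * f2 l by rewrite -H addrC addKr.
      ring.
    move/HP => Hi.
    have -> : mu = (mu + #|V2|%:R) - #|V2|%:R by rewrite addrK.
    by rewrite rpredB // natr_int.
  move=> nu /eigP [f1 [[x1 fx1] Hf1]] x cd Hx.
  have [dn0 cor] := coronal_reg sg2 rg2 V20 cd.
  rewrite cor in Hx.
  set n2 := (#|V2|%:R : algC) in n20 Hx dn0 cor *.
  set d := x - n2 - (2 * r2)%:R in dn0 Hx cor *.
  pose F (z : (V1 * V2) + (V1 * V2)) :=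
    match z with inl (i, _) => f1 i | inr (i, _) => n2 / d * f1 i end.
  apply: HP; apply/eigP; exists F; split.
    by exists (inl (x1, k0)).
  have Ex : x = n2 + n2 * nu + n2 * (n2 / d).
    by apply/eqP; rewrite -subr_eq0 -Hx; apply/eqP; ring.
  case => [[j l]|[s l]].
    rewrite (@eqn_l _ _ e1 e2 r1 rg1) /Uf /Wf /F /=.
    under eq_bigr do rewrite sum_const.
    rewrite sum_const.
    under eq_bigr do rewrite mulrCA.
    rewrite -mulr_sumr.
    move: (Hf1 j); rewrite /eqn rg1 => H.
    have -> : \sum_i (e1 i j)%:R * f1 i = nu * f1 j - r1%:R * f1 j by rewrite -H addrC addKr.
    rewrite -/n2 [in RHS]Ex; ring.
  rewrite (@eqn_r _ _ e1 e2 r2 rg2) /Uf /F /= sum_const.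
  under eq_bigr do rewrite mulrCA.
  rewrite -mulr_sumr -mulr_suml (reg_col sg2 rg2) -/n2.
  rewrite /d natrM; field; rewrite -natrM //.
move=> [H2 Hc] a /eigP [F [[z Fz] HF]].
set n2 := (#|V2|%:R : algC) in n20 Hc *.
have SL : forall j, (n2 * r1%:R + n2) * Uf F j + n2 * (\sum_i (e1 i j)%:R * Uf F i)
                    + n2 * Wf F j = a * Uf F j.
  move=> j.
  transitivity (\sum_l eqn (gprod_rel e1 e2) F (inl (j, l))).
    under [RHS]eq_bigr do rewrite (@eqn_l _ _ e1 e2 r1 rg1).
    by rewrite !big_split /= !sum_const -mulr_sumr.
  under eq_bigr do rewrite HF.
  by rewrite -mulr_sumr.
have SR : forall s, (n2 + r2%:R) * Wf F s + n2 * Uf F s + r2%:R * Wf F s = a * Wf F s.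
  move=> s.
  transitivity (\sum_l eqn (gprod_rel e1 e2) F (inr (s, l))).
    under [RHS]eq_bigr do rewrite (@eqn_r _ _ e1 e2 r2 rg2).
    rewrite !big_split /= !sum_const -mulr_sumr; congr (_ + _ + _).
    rewrite exchange_big /=.
    under [RHS]eq_bigr do rewrite -mulr_suml.
    rewrite /Wf mulr_sumr; apply: eq_bigr => k _; congr (_ * _).
    by rewrite -(rg2 k) deg_sum; apply: eq_bigr => l _; case: sg2 => _ ->.
  under eq_bigr do rewrite HF.
  by rewrite -mulr_sumr.
have intD : a - n2 \in Num.int -> a \in Num.int.
  by move=> H; rewrite -(subrK n2 a) rpredD // natr_int.
case: (boolP [forall i, (Uf F i == 0) && (Wf F i == 0)]) => [/forallP UW0 | ].
  case: z Fz => [[j l]|[s l]] Fz.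
    have := HF (inl (j, l)); rewrite (@eqn_l _ _ e1 e2 r1 rg1).
    have /andP [/eqP U0 /eqP W0] := UW0 j.
    rewrite W0 addr0 big1 ?addr0; last first.
      by move=> i _; have /andP [/eqP -> _] := UW0 i; rewrite mulr0.
    move/(mulIf Fz) <-.
    by rewrite rpredD ?rpredM ?natr_int.
  apply: intD; apply: H2; apply/eigP.
  exists (fun k => F (inr (s, k))); split; first by exists l.
  move=> y; have := HF (inr (s, y)); rewrite (@eqn_r _ _ e1 e2 r2 rg2).
  have /andP [/eqP U0 _] := UW0 s.
  rewrite U0 addr0 /eqn rg2 => E.
  by rewrite mulrBl -E; ring.
rewrite negb_forall => /existsP [i1].
case: (a =P n2 + (2 * r2)%:R) => [-> | an] Hi1.
  by rewrite rpredD ?natr_int.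
have dn0 : a - n2 - (2 * r2)%:R != 0.
  apply/eqP => H0; apply: an; move/eqP: H0; rewrite subr_eq0 subr_eq => /eqP ->; by rewrite addrC.
set d := a - n2 - (2 * r2)%:R in dn0 *.
have HW : forall s, Wf F s = n2 / d * Uf F s.
  move=> s; have := SR s => E.
  apply: (mulfI dn0); rewrite mulrA mulrCA divff // mulr1 /d.
  rewrite !mulrBl -E natrM; ring.
have U0 : Uf F i1 != 0.
  apply: contraNneq Hi1 => U0; by rewrite HW U0 mulr0 eqxx.
set nu := (a - n2 - n2 * (n2 / d)) / n2.
have Enu : eigenvalue (slap e1) nu.
  apply/eigP; exists (Uf F); split; first by exists i1.
  move=> j; rewrite /eqn rg1; apply: (mulfI n20).
  have := SL j; rewrite HW => E.
  have -> : n2 * (nu * Uf F j) = a * Uf F j - n2 * Uf F j - n2 * (n2 / d) * Uf F j.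
    by rewrite /nu; field; rewrite dn0 n20.
  apply: (@etrans _ _ ((n2 * r1%:R + n2) * Uf F j + n2 * (\sum_i (e1 i j)%:R * Uf F i) + n2 * (n2 / d * Uf F j) - n2 * Uf F j - n2 * (n2 / d) * Uf F j)); first ring.
  by rewrite E.
case: (boolP (coronal_defined (slap e2) (a - n2))) => cd.
  apply: (Hc nu Enu a cd).
  have [_ ->] := coronal_reg sg2 rg2 V20 cd.
  by rewrite -/n2 -/d /nu; field; rewrite dn0 n20.
apply: intD; apply: H2; exact: nonunit_eig.
Qed.
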